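(* Let $h>0$ and let $\Gamma_h\subset\mathbf{R}^3$ be the closed curve on the cylinder $x^2+y^2=1$ given by $\Gamma_h(t)=(\cos t,\sin t,z(t))$, $t\in[0,2\pi]$, where $z$ is the continuous piecewise linear function with $z(0)=z(\pi)=z(2\pi)=h/2$, $z(\pi/2)=z(3\pi/2)=-h/2$, linear on each interval $[k\pi/2,(k+1)\pi/2]$, $k=0,1,2,3$. (Thus $\Gamma_h$ consists of four helical segments joining cyclically the points $p_1=(1,0,h/2)$, $p_2=(0,1,-h/2)$, $p_3=(-1,0,h/2)$, $p_4=(0,-1,-h/2)$.) Let $\overline\Gamma_h$ be the orthogonal projection of $\Gamma_h$ into the $xz$-plane. Then the width of $\Gamma_h$ equals the width of $\overline\Gamma_h$.
   Context: The width of a set in $\mathbf{R}^3$ is the infimum of the distances between pairs of parallel planes such that the set lies between them. The width of the planar set $\overline\Gamma_h$ (in the $xz$-plane) is the infimum of the distances between pairs of parallel lines in the $xz$-plane such that $\overline\Gamma_h$ lies between them. *)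

(* Defs.v *)
From HB Require Import structures.
From mathcomp Require Import all_boot all_order all_algebra.
From mathcomp Require Import all_classical all_reals.
From mathcomp Require Import topology normedtype sequences exp trigo.
Set Implicit Arguments. Unset Strict Implicit. Unset Printing Implicit Defensive.
Import Order.TTheory GRing.Theory Num.Theory.
Local Open Scope classical_set_scope.
Local Open Scope ring_scope.

Section Defs.
Variable R : realType.

Definition zfun (h t : R) : R :=
  if t <= pi / 2 then h / 2 - h * (t / (pi / 2))
  else if t <= pi then - (h / 2) + h * ((t - pi / 2) / (pi / 2))
  else if t <= 3 * pi / 2 then h / 2 - h * ((t - pi) / (pi / 2))
  else - (h / 2) + h * ((t - 3 * pi / 2) / (pi / 2)).

Definition Gamma (h : R) : set (R * R * R) :=
  [set p | exists t, 0 <= t <= 2 * pi /\ p = (cos t, sin t, zfun h t)].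

Definition Gammabar (h : R) : set (R * R) :=
  [set q | exists t, 0 <= t <= 2 * pi /\ q = (cos t, zfun h t)].

(* Width in R^3: infimum of distances between pairs of parallel planes
   {u.x = a}, {u.x = b} (u <> 0) such that the set lies between them. *)
Definition width3 (S : set (R * R * R)) : R :=
  inf [set d | exists (u1 u2 u3 a b : R),
        (u1, u2, u3) != (0, 0, 0) /\
        (forall p, S p -> a <= u1 * p.1.1 + u2 * p.1.2 + u3 * p.2 <= b) /\
        d = `|b - a| / Num.sqrt (u1 ^+ 2 + u2 ^+ 2 + u3 ^+ 2)].

(* Width in the plane: infimum of distances between pairs of parallel lines
   {u.x = a}, {u.x = b} (u <> 0) such that the set lies between them. *)
Definition width2 (S : set (R * R)) : R :=
  inf [set d | exists (u1 u2 a b : R),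
        (u1, u2) != (0, 0) /\
        (forall p, S p -> a <= u1 * p.1 + u2 * p.2 <= b) /\
        d = `|b - a| / Num.sqrt (u1 ^+ 2 + u2 ^+ 2)].

End Defs.

(* Main.v *)
Require Import Defs.
From HB Require Import structures.
From mathcomp Require Import all_boot all_order all_algebra.
From mathcomp Require Import all_classical all_reals.
From mathcomp Require Import topology normedtype sequences exp trigo.
From mathcomp Require Import ring lra.
Import Order.TTheory GRing.Theory Num.Theory.
Local Open Scope classical_set_scope.
Local Open Scope ring_scope.

Section S.
Variable R : realType.
Variable h : R.
Hypothesis hpos : 0 < h.

Let k := h / (pi / 2).
Lemma k_ge0 : 0 <= k.
Proof. rewrite /k; apply: divr_ge0; first exact: ltW. apply: divr_ge0 => //. exact: pi_ge0. Qed.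

Lemma hk : k * pi = 2 * h.
Proof. rewrite /k. have := @pi_gt0 R. move=> hp. field. lra. Qed.

Lemma zfunE t : zfun h t =
  if t <= pi / 2 then h / 2 - k * t
  else if t <= pi then - (h / 2) + k * (t - pi / 2)
  else if t <= 3 * pi / 2 then h / 2 - k * (t - pi)
  else - (h / 2) + k * (t - 3 * pi / 2).
Proof. have e x : h * (x / (pi / 2)) = k * x by rewrite mulrCA mulrC. by rewrite /zfun !e. Qed.

Ltac zcase := repeat (let H := fresh "H" in case: ifPn => H; try rewrite -ltNge in H).

Lemma zsym2pi t : 0 <= t <= 2 * pi -> zfun h (2 * pi - t) = zfun h t.
Proof. move=> /andP[t0 t1]. have := @pi_gt0 R. have := hk. move=> e1 e2. have := k_ge0 => e3. rewrite !zfunE. zcase; nra. Qed.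
Lemma pi2_eq : (2 : R) * pi = pi *+ 2.
Proof. by rewrite mulr2n mulrDl mul1r. Qed.

Lemma cos3 (x : R) : cos (x + 3 * pi / 2) = sin x.
Proof.
have -> : x + 3 * pi / 2 = (x + pi / 2) + pi by field.
by rewrite cosDpi cosDpihalf opprK.
Qed.

Lemma sin3 (x : R) : sin (x + 3 * pi / 2) = - cos x.
Proof.
have -> : x + 3 * pi / 2 = (x + pi / 2) + pi by field.
by rewrite sinDpi sinDpihalf.
Qed.

Lemma zsympi t : 0 <= t <= pi -> zfun h (pi - t) = zfun h t.
Proof. move=> /andP[t0 t1]. have := @pi_gt0 R. have := hk. move=> e1 e2. have := k_ge0 => e3. rewrite !zfunE. zcase; nra. Qed.

Lemma zsym3pi t : pi <= t <= 2 * pi -> zfun h (3 * pi - t) = zfun h t.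
Proof. move=> /andP[t0 t1]. have := @pi_gt0 R. have := hk. move=> e1 e2. have := k_ge0 => e3. rewrite !zfunE. zcase; nra. Qed.

Lemma zshift s sg : 0 <= sg -> sg <= s -> s <= pi / 2 ->
  zfun h sg - zfun h (sg - s + 3 * pi / 2) = h - k * s.
Proof. move=> t0 t1 t2. have := @pi_gt0 R. have := hk. move=> e1 e2. have := k_ge0 => e3. rewrite !zfunE. zcase; nra. Qed.

Lemma Z2 t : 0 <= t <= 2 * pi -> exists s, [/\ 0 <= s, s <= pi / 2,
  - sin s <= cos t & zfun h t = - (h / 2) + k * s].
Proof.
move=> /andP[t0 t1]. have := @pi_gt0 R. have := hk. move=> e1 e2.
rewrite zfunE. case: ifPn => H1.
  exists (pi / 2 - t); split; [lra | lra | | nra].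
  have : 0 <= sin (pi / 2 - t) by apply: sin_ge0_pi; apply/andP; split; lra.
  have : 0 <= cos t by apply: cos_ge0_pihalf; apply/andP; split; lra.
  lra.
rewrite -ltNge in H1. case: ifPn => H2.
  exists (t - pi / 2); split; [lra | lra | | nra].
  by rewrite -[in cos t](subrK (pi / 2) t) cosDpihalf.
rewrite -ltNge in H2. case: ifPn => H3.
  exists (3 * pi / 2 - t); split; [lra | lra | | nra].
  rewrite [in cos t](_ : t = - (3 * pi / 2 - t) + 3 * pi / 2); last by ring.
  by rewrite cos3 sinN.
rewrite -ltNge in H3.
exists (t - 3 * pi / 2); split; [lra | lra | | nra].
rewrite [in cos t](_ : t = (t - 3 * pi / 2) + 3 * pi / 2); last by ring.
rewrite cos3.
have : 0 <= sin (t - 3 * pi / 2) by apply: sin_ge0_pi; apply/andP; split; lra.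
lra.
Qed.

Lemma zle t : 0 <= t <= 2 * pi -> zfun h t <= h / 2.
Proof.
move=> Ht. have [s [s0 s1 _ ->]] := Z2 t Ht. have := hk. have := k_ge0. nra.
Qed.
Definition in3 (u1 u2 u3 a b : R) := forall t, 0 <= t <= 2 * pi ->
  a <= u1 * cos t + u2 * sin t + u3 * zfun h t <= b.

Lemma flipy t : 0 <= t <= 2 * pi -> exists t', [/\ 0 <= t' <= 2 * pi,
  cos t' = cos t, sin t' = - sin t & zfun h t' = zfun h t].
Proof.
move=> Ht; have /andP[t0 t1] := Ht; exists (2 * pi - t); split.
- apply/andP; split; lra.
- by rewrite (_ : 2 * pi - t = - t + pi *+ 2) ?cosD2pi ?cosN // -pi2_eq addrC.
- by rewrite (_ : 2 * pi - t = - t + pi *+ 2) ?sinD2pi ?sinN // -pi2_eq addrC.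
- exact: zsym2pi.
Qed.

Lemma flipx t : 0 <= t <= 2 * pi -> exists t', [/\ 0 <= t' <= 2 * pi,
  cos t' = - cos t, sin t' = sin t & zfun h t' = zfun h t].
Proof.
move=> /andP[t0 t1]. have := @pi_gt0 R => p0.
case: (leP t pi) => Ht.
  exists (pi - t); split.
  - apply/andP; split; lra.
  - by rewrite addrC cosDpi cosN.
  - by rewrite addrC sinDpi sinN opprK.
  - apply: zsympi; apply/andP; split; lra.
exists (3 * pi - t); split.
- apply/andP; split; lra.
- by rewrite (_ : 3 * pi - t = (- t + pi) + pi *+ 2) ?cosD2pi ?cosDpi ?cosN //;
    rewrite -pi2_eq; ring.
- by rewrite (_ : 3 * pi - t = (- t + pi) + pi *+ 2) ?sinD2pi ?sinDpi ?sinN ?opprK //;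
    rewrite -pi2_eq; ring.
- apply: zsym3pi; apply/andP; split; lra.
Qed.

Lemma in3_negx u1 u2 u3 a b : in3 u1 u2 u3 a b -> in3 (- u1) u2 u3 a b.
Proof.
move=> H t Ht. have [t' [Ht' c s z]] := flipx t Ht.
by have := H t' Ht'; rewrite c s z mulrN mulNr.
Qed.

Lemma in3_negy u1 u2 u3 a b : in3 u1 u2 u3 a b -> in3 u1 (- u2) u3 a b.
Proof.
move=> H t Ht. have [t' [Ht' c s z]] := flipy t Ht.
by have := H t' Ht'; rewrite c s z mulrN mulNr.
Qed.

Lemma in3_abs u1 u2 u3 a b : in3 u1 u2 u3 a b -> in3 `|u1| `|u2| u3 a b.
Proof.
move=> H.
have H1 : in3 `|u1| u2 u3 a b.
  case: (leP 0 u1) => h1; first by rewrite ger0_norm.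
  by rewrite ltr0_norm //; apply: in3_negx.
case: (leP 0 u2) => h2; first by rewrite (ger0_norm h2).
by rewrite (ltr0_norm h2); apply: in3_negy.
Qed.

Lemma in3_neg u1 u2 u3 a b : in3 u1 u2 u3 a b -> in3 (- u1) (- u2) (- u3) (- b) (- a).
Proof.
move=> H t Ht. have /andP[h1 h2] := H t Ht. apply/andP; split; lra.
Qed.

Lemma polyineq (ca sa cs ss : R) : 0 <= ca -> 0 <= cs -> 0 <= ss ->
  ca <= cs -> ss <= sa -> ca ^+ 2 + sa ^+ 2 = 1 -> cs ^+ 2 + ss ^+ 2 = 1 ->
  1 + ss <= ca * cs + sa * ss + sa.
Proof.
move=> ca0 cs0 ss0 cacs sssa e1 e2.
set cx := ca * cs + sa * ss. set sx := sa * cs - ca * ss.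
have sx0 : 0 <= sx by rewrite /sx; nra.
have sa0 : 0 <= sa by lra.
have hA : (1 + sa) * (ca * cs - (1 - sa) * ss) >= 0.
  have ss1 : ss <= 1 by nra.
  have i1 : ca * ss <= cs * (1 + sa) by nra.
  have : ca * (cs * (1 + sa) - ca * ss) >= 0 by apply: mulr_ge0; lra.
  have E : (1 + sa) * (ca * cs - (1 - sa) * ss) = ca * (cs * (1 + sa) - ca * ss).
    apply/eqP; rewrite -subr_eq0.
    have -> : (1 + sa) * (ca * cs - (1 - sa) * ss) - ca * (cs * (1 + sa) - ca * ss)
         = ss * (ca ^+ 2 + sa ^+ 2 - 1) by ring.
    by rewrite e1 subrr mulr0.
  rewrite E.
  done.
have cxss : ss <= cx.
  rewrite /cx. have : 0 <= ca * cs - (1 - sa) * ss by nra. lra.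
have id1 : sa = ss * cx + cs * sx.
  rewrite /cx /sx. have -> : ss * (ca * cs + sa * ss) + cs * (sa * cs - ca * ss)
    = sa * (cs ^+ 2 + ss ^+ 2) by ring. by rewrite e2 mulr1.
have id2 : cx ^+ 2 + sx ^+ 2 = 1.
  rewrite /cx /sx. have -> : (ca * cs + sa * ss) ^+ 2 + (sa * cs - ca * ss) ^+ 2
    = (ca ^+ 2 + sa ^+ 2) * (cs ^+ 2 + ss ^+ 2) by ring. by rewrite e1 e2 mulr1.
have cx1 : cx <= 1 by nra.
have sxcs : sx <= cs by nra.
have : (1 + ss) * (1 - cx) <= sx ^+ 2 by nra.
have : sx ^+ 2 <= cs * sx by nra.
rewrite -/cx. nra.
Qed.
Lemma pairb u1 u2 u3 a b s : 0 <= u1 -> 0 <= u2 -> 0 <= u3 -> in3 u1 u2 u3 a b ->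
  0 <= s -> s <= pi / 2 ->
  Num.sqrt (u1 ^+ 2 + u2 ^+ 2) * (1 + sin s) + u3 * (h - k * s) <= b - a.
Proof.
move=> u10 u20 u30 H s0 s1.
have p0 := @pi_gt0 R.
set r := Num.sqrt (u1 ^+ 2 + u2 ^+ 2).
have r0 : 0 <= r := sqrtr_ge0 _.
have rr : r ^+ 2 = u1 ^+ 2 + u2 ^+ 2 by rewrite sqr_sqrtr // addr_ge0 // sqr_ge0.
have u1r : u1 <= r by nra.
set x := u1 / r.
have x0 : 0 <= x by apply: divr_ge0.
have x1 : x <= 1.
  rewrite /x; have [->|rn0] := eqVneq r 0; first by rewrite invr0 mulr0.
  by rewrite ler_pdivrMr ?mul1r // lt_neqAle eq_sym rn0.
have xin : x \in `[-1, 1] by rewrite in_itv /=; apply/andP; split; lra.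
set al := acos x.
have ca : cos al = x by rewrite /al acosK.
have al0 : 0 <= al by apply: acos_ge0; apply/andP; split; lra.
have alpi : al <= pi by apply: acos_lepi; apply/andP; split; lra.
have sa0 : 0 <= sin al by apply: sin_ge0_pi; apply/andP; split.
have ru1 : r * cos al = u1.
  rewrite ca /x. have [r00|rn0] := eqVneq r 0.
    rewrite r00 mul0r. move: rr; rewrite r00 expr0n /=. nra.
  by rewrite mulrC divfK.
have ru2 : r * sin al = u2.
  have e : (r * sin al) ^+ 2 = u2 ^+ 2.
    have := cos2Dsin2 al. move: ru1 rr. nra.
  have : 0 <= r * sin al by apply: mulr_ge0.
  nra.
have alpih : al <= pi / 2.
  case: (leP al (pi / 2)) => // hal.
  have : cos al < cos (pi / 2).
    by rewrite ltr_cos // in_itv /=; apply/andP; split; lra.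
  rewrite cos_pihalf ca. lra.
have cs0 : 0 <= cos s by apply: cos_ge0_pihalf; apply/andP; split; lra.
have ss0 : 0 <= sin s by apply: sin_ge0_pi; apply/andP; split; lra.
case: (leP al s) => hals.
  have /andP[_ Hb] := H al (ltac:(apply/andP; split; lra)).
  have /andP[Ha _] := H (al - s + 3 * pi / 2) (ltac:(apply/andP; split; lra)).
  move: Ha Hb. rewrite cos3 sin3.
  have zz : u3 * zfun h al - u3 * zfun h (al - s + 3 * pi / 2) = u3 * (h - k * s).
    by rewrite -mulrBr zshift.
  have E : u1 * (cos al - sin (al - s)) + u2 * (sin al + cos (al - s)) = r * (1 + sin s).
    rewrite -ru1 -ru2 sinB cosB. apply/eqP; rewrite -subr_eq0.
    have -> : r * cos al * (cos al - (sin al * cos s - cos al * sin s)) +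
      r * sin al * (sin al + (cos al * cos s + sin al * sin s)) - r * (1 + sin s)
      = r * (1 + sin s) * (cos al ^+ 2 + sin al ^+ 2 - 1) by ring.
    by rewrite cos2Dsin2 subrr mulr0.
  lra.
have /andP[_ Hb] := H s (ltac:(apply/andP; split; lra)).
have /andP[Ha _] := H (s - s + 3 * pi / 2) (ltac:(apply/andP; split; lra)).
move: Ha Hb. rewrite cos3 sin3 subrr sin0 cos0.
have zz : u3 * zfun h s - u3 * zfun h (s - s + 3 * pi / 2) = u3 * (h - k * s).
  by rewrite -mulrBr zshift.
have cacs : cos al <= cos s.
  apply: ltW. by rewrite ltr_cos // in_itv /=; apply/andP; split; lra.
have sssa : sin s <= sin al.
  apply: ltW. by rewrite ltr_sin // in_itv /=; apply/andP; split; lra.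
have P := polyineq (cos al) (sin al) (cos s) (sin s) (ltac:(lra)) cs0 ss0 cacs sssa (cos2Dsin2 al) (cos2Dsin2 s).
have E : u1 * cos s + u2 * sin s + u2 = r * (cos al * cos s + sin al * sin s + sin al).
  rewrite -ru1 -ru2. ring.
have : r * (1 + sin s) <= r * (cos al * cos s + sin al * sin s + sin al).
  exact: ler_wpM2l.
rewrite subrr in zz. lra.
Qed.
Lemma toS2 u1 u2 u3 a b : 0 <= u3 -> in3 u1 u2 u3 a b -> (u1, u2, u3) != (0, 0, 0) ->
  exists v1 v2 a' b', [/\ (v1, v2) != (0, 0),
   (forall t, 0 <= t <= 2 * pi -> a' <= v1 * cos t + v2 * zfun h t <= b') &
   `|b - a| / Num.sqrt (u1 ^+ 2 + u2 ^+ 2 + u3 ^+ 2) =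
   `|b' - a'| / Num.sqrt (v1 ^+ 2 + v2 ^+ 2)].
Proof.
move=> u30 H hne.
have H' : in3 `|u1| `|u2| u3 a b by apply: in3_abs.
have e1 : `|u1| ^+ 2 = u1 ^+ 2 := real_normK (num_real _).
have e2 : `|u2| ^+ 2 = u2 ^+ 2 := real_normK (num_real _).
set r := Num.sqrt (`|u1| ^+ 2 + `|u2| ^+ 2).
have r0 : 0 <= r := sqrtr_ge0 _.
have rr : r ^+ 2 = u1 ^+ 2 + u2 ^+ 2.
  by rewrite sqr_sqrtr ?e1 ?e2 // addr_ge0 // sqr_ge0.
have p0 := @pi_gt0 R.
exists r, u3, (r + u3 * (h / 2) - (b - a)), (r + u3 * (h / 2)); split.
- apply/eqP => -[r00 u300].
  move: rr; rewrite r00 expr0n /= => rr.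
  have a1 : u1 = 0 by nra.
  have a2 : u2 = 0 by nra.
  by move: hne; rewrite a1 a2 u300 eqxx.
- move=> t Ht.
  have [s [s0 s1 hcs hz]] := Z2 t Ht.
  have P := pairb `|u1| `|u2| u3 a b s (normr_ge0 u1) (normr_ge0 u2) u30 H' s0 s1.
  rewrite -/r in P.
  have c1 : r * cos t <= r by rewrite -[X in _ <= X]mulr1; apply: ler_wpM2l => //; exact: cos_le1.
  have c2 : r * (- sin s) <= r * cos t by apply: ler_wpM2l.
  have z1 : u3 * zfun h t <= u3 * (h / 2) by apply: ler_wpM2l => //; exact: zle.
  rewrite hz in z1 *.
  apply/andP; split; lra.
- congr (_ / _).
    congr (`| _ |). ring.
  by rewrite rr.
Qed.

End S.

Arguments toS2 {R h} hpos {u1 u2 u3 a b}.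
Arguments in3_neg {R h u1 u2 u3 a b}.

Theorem lemma5p1 (R : realType) (h : R) (hpos : 0 < h) :
  width3 (Gamma h) = width2 (Gammabar h).
Proof.
rewrite /width3 /width2; congr inf; apply/seteqP; split => d.
- move=> [u1 [u2 [u3 [a [b [hne [hin ->]]]]]]].
  have H3 : in3 R h u1 u2 u3 a b.
    move=> t Ht; apply: (hin (cos t, sin t, zfun h t)); by exists t.
  have fin : forall v1 v2 a' b', [/\ (v1, v2) != (0, 0),
   (forall t, 0 <= t <= 2 * pi -> a' <= v1 * cos t + v2 * zfun h t <= b') &
   `|b - a| / Num.sqrt (u1 ^+ 2 + u2 ^+ 2 + u3 ^+ 2) =
   `|b' - a'| / Num.sqrt (v1 ^+ 2 + v2 ^+ 2)] ->
   [set d | exists u1 u2 a b : R, (u1, u2) != (0, 0) /\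
     (forall p, Gammabar h p -> a <= u1 * p.1 + u2 * p.2 <= b) /\
     d = `|b - a| / Num.sqrt (u1 ^+ 2 + u2 ^+ 2)]
   (`|b - a| / Num.sqrt (u1 ^+ 2 + u2 ^+ 2 + u3 ^+ 2)).
    move=> v1 v2 a' b' [nz cont ->].
    exists v1, v2, a', b'; split => //; split => //.
    by move=> p [t [Ht ->]] /=; apply: cont.
  case: (leP 0 u3) => hu3.
    have [v1 [v2 [a' [b' Hv]]]] := toS2 hpos hu3 H3 hne.
    exact: (fin v1 v2 a' b').
  have hu3' : 0 <= - u3 by lra.
  have H3' := in3_neg H3.
  have hne' : (- u1, - u2, - u3) != (0, 0, 0).
    apply/eqP => -[e1 e2 e3]; move/eqP: hne; apply.
    by rewrite -(opprK u1) -(opprK u2) -(opprK u3) e1 e2 e3 oppr0.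
  have [v1 [v2 [a' [b' [Hv1 Hv2 Hv3]]]]] :=
    toS2 hpos hu3' H3' hne'.
  apply: (fin v1 v2 a' b'); split => //.
  by rewrite -Hv3 !sqrrN opprK addrC.
- move=> [u1 [u2 [a [b [hne [hin ->]]]]]].
  exists u1, 0, u2, a, b; split; [|split].
  + apply/eqP => -[e1 e2]; move/eqP: hne; apply; by rewrite e1 e2.
  + move=> p [t [Ht ->]] /=; rewrite mul0r addr0.
    by apply: (hin (cos t, zfun h t)); exists t.
  + by rewrite expr0n /= addr0.
Qed.
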